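(* Let $(G,\cdot)$ be a group and let $\psi\in\operatorname{End}(G,\cdot)$. Consider the subset $$N=\{\,\nu(g) : g\in G\,\},\qquad \nu(g)\colon h\mapsto g\cdot\psi(g)^{-1}\cdot h\cdot\psi(g),$$ of $\operatorname{Perm}(G)$. The following are equivalent: (a) $N$ is a subgroup of $\operatorname{Perm}(G)$; (b) $N$ is normalised by $\lambda(G)$; (c) $N$ is a regular subgroup of $\operatorname{Perm}(G)$ which normalises, and is normalised by, $\lambda(G)$; (d) $\psi([[G,\psi],G])\le Z(G,\cdot)$; (e) $(G,\cdot,\circ)$ is a bi-skew brace, where $g\circ h=g\cdot\psi(g)^{-1}\cdot h\cdot\psi(g)$ for all $g,h\in G$.
   Context: $\operatorname{Perm}(G)$ denotes the group of all permutations of the underlying set of $G$, and $\lambda\colon G\to\operatorname{Perm}(G)$, $\lambda(g)(h)=g\cdot h$, is the left regular representation. A subset $N\subseteq\operatorname{Perm}(G)$ is regular if the map $N\to G$, $\eta\mapsto\eta(1)$, is a bijection. ''$N$ normalises $\lambda(G)$'' means $\eta\lambda(G)\eta^{-1}=\lambda(G)$ for all $\eta\in N$; ''$N$ is normalised by $\lambda(G)$'' means $\lambda(g)N\lambda(g)^{-1}=N$ for all $g\in G$. For $\psi\in\operatorname{End}(G,\cdot)$ and $g\in G$, write $[g,\psi]=g\cdot\psi(g)^{-1}$, and $[G,\psi]$ for the subgroup generated by all $[g,\psi]$, $g\in G$. Commutators are $[x,y]=xyx^{-1}y^{-1}$, and for subgroups $A,B$, $[A,B]$ is the subgroup generated by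 all $[a,b]$, $a\in A,b\in B$. $Z(G,\cdot)$ is the centre. A skew (left) brace is a triple $(G,\cdot,\circ)$ where $(G,\cdot)$ and $(G,\circ)$ are groups and $g\circ(h\cdot k)=(g\circ h)\cdot g^{-1}\cdot(g\circ k)$ for all $g,h,k$ (with $g^{-1}$ the inverse in $(G,\cdot)$). A bi-skew brace is a triple $(G,\cdot,\circ)$ such that both $(G,\cdot,\circ)$ and $(G,\circ,\cdot)$ are skew braces. *)

(* Defs.v *)
Record group_on (T : Type) := GroupOn {
  gmul : T -> T -> T;
  gone : T;
  ginv : T -> T;
  gmulA : forall x y z, gmul x (gmul y z) = gmul (gmul x y) z;
  gmul1l : forall x, gmul gone x = x;
  gmul1r : forall x, gmul x gone = x;
  gmulVl : forall x, gmul (ginv x) x = gone;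
  gmulVr : forall x, gmul x (ginv x) = gone
}.
Arguments gmul {T} _ _ _.
Arguments gone {T} _.
Arguments ginv {T} _ _.

Definition is_group_op {T : Type} (op : T -> T -> T) : Prop :=
  exists (e : T) (i : T -> T),
    (forall x y z, op x (op y z) = op (op x y) z) /\
    (forall x, op e x = x) /\ (forall x, op x e = x) /\
    (forall x, op (i x) x = e) /\ (forall x, op x (i x) = e).

Section Defs.
Context {T : Type} (G : group_on T).
Local Notation "x * y" := (gmul G x y).
Local Notation "x ^-1" := (ginv G x) (at level 3).

Definition is_endo (psi : T -> T) : Prop :=
  forall x y, psi (x * y) = psi x * psi y.

Definition is_subgroup (H : T -> Prop) : Prop :=
  H (gone G) /\ (forall x y, H x -> H y -> H (x * y)) /\
  (forall x, H x -> H (x ^-1)).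

Definition gen (S : T -> Prop) : T -> Prop :=
  fun x => forall H, is_subgroup H -> (forall s, S s -> H s) -> H x.

Definition comm (x y : T) : T := x * y * x^-1 * y^-1.

Definition comm_psi (psi : T -> T) : T -> Prop :=
  gen (fun x => exists g, x = g * (psi g)^-1).

Definition comm_sub (A B : T -> Prop) : T -> Prop :=
  gen (fun x => exists a b, A a /\ B b /\ x = comm a b).

Definition fullset : T -> Prop := fun _ => True.

Definition center : T -> Prop := fun z => forall x, z * x = x * z.

Definition lambda (g : T) : T -> T := fun h => g * h.

Definition nu (psi : T -> T) (g : T) : T -> T :=
  fun h => g * (psi g)^-1 * h * psi g.

Definition Nset (psi : T -> T) : (T -> T) -> Prop :=
  fun f => exists g, f = nu psi g.

Definition lambdaG : (T -> T) -> Prop := fun f => exists g, f = lambda g.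

Definition inverse_fun (f f' : T -> T) : Prop :=
  (forall x, f (f' x) = x) /\ (forall x, f' (f x) = x).

(* Every element of Perm(G) is a bijection; N is a subgroup of Perm(G)
   iff it consists of bijections and is closed under identity, composition
   and inverses. *)
Definition is_perm_subgroup (N : (T -> T) -> Prop) : Prop :=
  (forall f, N f -> exists f', inverse_fun f f') /\
  N (fun x => x) /\
  (forall f1 f2, N f1 -> N f2 -> N (fun x => f1 (f2 x))) /\
  (forall f f', N f -> inverse_fun f f' -> N f').

(* regular: eta |-> eta(1) is a bijection N -> G *)
Definition is_regular (N : (T -> T) -> Prop) : Prop :=
  (forall f1 f2, N f1 -> N f2 -> f1 (gone G) = f2 (gone G) -> f1 = f2) /\
  (forall g, exists f, N f /\ f (gone G) = g).

Definition normalised_by_lambda (N : (T -> T) -> Prop) : Prop :=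
  forall g, forall f,
    N f <-> (exists eta, N eta /\
               f = (fun x => lambda g (eta (lambda (g ^-1) x)))).

Definition normalises_lambda (N : (T -> T) -> Prop) : Prop :=
  forall eta eta', N eta -> inverse_fun eta eta' ->
    forall f, lambdaG f <-> (exists l, lambdaG l /\
                              f = (fun x => eta (l (eta' x)))).

End Defs.

Definition group_axioms {T : Type} (op : T -> T -> T) (e : T) (i : T -> T) : Prop :=
  (forall x y z, op x (op y z) = op (op x y) z) /\
  (forall x, op e x = x) /\ (forall x, op x e = x) /\
  (forall x, op (i x) x = e) /\ (forall x, op x (i x) = e).

Definition is_skew_brace {T : Type} (op1 op2 : T -> T -> T) : Prop :=
  exists e1 i1 e2 i2, group_axioms op1 e1 i1 /\ group_axioms op2 e2 i2 /\
  (forall g h k, op2 g (op1 h k) = op1 (op1 (op2 g h) (i1 g)) (op2 g k)).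

Definition is_bi_skew_brace {T : Type} (op1 op2 : T -> T -> T) : Prop :=
  is_skew_brace op1 op2 /\ is_skew_brace op2 op1.

(* Main.v *)
Require Import Defs.
From Stdlib Require Import FunctionalExtensionality.

Section S.
Variable T : Type.
Variable G : group_on T.
Variable psi : T -> T.
Hypothesis Hpsi : is_endo G psi.

Local Notation "x * y" := (gmul G x y).
Local Notation "x ^-1" := (ginv G x) (at level 3).
Local Notation one := (gone G).

Lemma mulA_r x y z : (x * y) * z = x * (y * z).
Proof. symmetry; apply gmulA. Qed.
Lemma mulKl x y : x^-1 * (x * y) = y.
Proof. rewrite gmulA, gmulVl, gmul1l; reflexivity. Qed.
Lemma mulKr x y : x * (x^-1 * y) = y.
Proof. rewrite gmulA, gmulVr, gmul1l; reflexivity. Qed.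
Lemma uniq_inv a b : a * b = one -> a = b^-1.
Proof.
  intro H. transitivity (a * (b * b^-1)).
  rewrite gmulVr, gmul1r; reflexivity.
  rewrite gmulA, H, gmul1l; reflexivity.
Qed.
Lemma invM x y : (x * y)^-1 = y^-1 * x^-1.
Proof.
  symmetry; apply uniq_inv.
  rewrite mulA_r, (gmulA _ G (x^-1)), gmulVl, gmul1l, gmulVl; reflexivity.
Qed.
Lemma invinv x : (x^-1)^-1 = x.
Proof. symmetry; apply uniq_inv, gmulVr. Qed.
Lemma inv1 : one^-1 = one.
Proof. symmetry; apply uniq_inv, gmul1l. Qed.
Lemma psiM x y : psi (x * y) = psi x * psi y.
Proof. apply Hpsi. Qed.
Lemma psi1 : psi one = one.
Proof.
  assert (E : psi one = psi one * psi one) by (rewrite <- psiM, gmul1l; reflexivity).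
  transitivity ((psi one)^-1 * (psi one * psi one)).
  rewrite mulKl; reflexivity.
  rewrite <- E, gmulVl; reflexivity.
Qed.
Lemma psiV x : psi (x^-1) = (psi x)^-1.
Proof. apply uniq_inv. rewrite <- psiM, gmulVl, psi1; reflexivity. Qed.

Hint Rewrite mulA_r gmul1l gmul1r gmulVl gmulVr mulKl mulKr invinv inv1 invM
  psiM psiV psi1 : grp.
Ltac grp := autorewrite with grp; reflexivity.

Lemma center1 : center G one.
Proof. intro x; grp. Qed.
Lemma center_mul a b : center G a -> center G b -> center G (a * b).
Proof.
  intros Ha Hb x. rewrite mulA_r, Hb, <- mulA_r, Ha, mulA_r; reflexivity.
Qed.
Lemma center_inv a : center G a -> center G (a^-1).
Proof.
  intros Ha x. transitivity (a^-1 * (x * a) * a^-1). grp.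
  rewrite <- Ha. grp.
Qed.
Lemma center_conj z a : center G z -> a * z * a^-1 = z.
Proof. intro Hz. rewrite <- Hz. grp. Qed.

Lemma L1 a b c d : (forall x, a * x * b = c * x * d) -> center G (d * b^-1).
Proof.
  intros H y. assert (H1 := H one). assert (Hy := H y).
  assert (claim : d * b^-1 = c^-1 * a).
  { transitivity (c^-1 * (c * one * d) * b^-1). grp. rewrite <- H1. grp. }
  transitivity (c^-1 * a * y). rewrite claim; reflexivity.
  transitivity (c^-1 * (a * y * b) * b^-1). grp. rewrite Hy. grp.
Qed.

Lemma L2 a b c d : a * b = c * d -> center G (d * b^-1) ->
  forall x, a * x * b = c * x * d.
Proof.
  intros H Hz x. assert (Ea : a = c * d * b^-1).
  { transitivity (a * b * b^-1). grp. rewrite H; reflexivity. }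
  rewrite Ea. transitivity (c * (d * b^-1 * x) * b). grp.
  rewrite (Hz x). grp.
Qed.

Lemma NU_EQ m a d : (forall x, nu G psi m x = a * x * d) ->
  m = a * d /\ center G (d * (psi m)^-1).
Proof.
  intro H. split.
  - transitivity (nu G psi m one). unfold nu; grp. rewrite H. grp.
  - apply (L1 (m * (psi m)^-1) (psi m) a d). intro x. apply H.
Qed.

Lemma NU_EQ' m a d : m = a * d -> center G (d * (psi m)^-1) ->
  forall x, nu G psi m x = a * x * d.
Proof.
  intros Hm Hz. apply L2; auto.
  transitivity m. grp. exact Hm.
Qed.

Definition P0 := forall g k, center G (comm G (psi (g * (psi g)^-1)) (psi k)).

Lemma comp_fwd g k : center G (comm G (psi (g * (psi g)^-1)) (psi k)) ->
  forall x, nu G psi (nu G psi g k) x = nu G psi g (nu G psi k x).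
Proof.
  intros Hz x.
  transitivity ((g * (psi g)^-1) * (k * (psi k)^-1) * x * (psi k * psi g)).
  - apply NU_EQ'.
    + unfold nu; grp.
    + replace (psi k * psi g * (psi (nu G psi g k))^-1)
        with ((comm G (psi (g * (psi g)^-1)) (psi k))^-1)
        by (unfold comm, nu; grp).
      apply center_inv; exact Hz.
  - unfold nu; grp.
Qed.

Lemma comp_bwd m g k : (forall x, nu G psi m x = nu G psi g (nu G psi k x)) ->
  center G (comm G (psi (g * (psi g)^-1)) (psi k)).
Proof.
  intro H.
  assert (H' : forall x, nu G psi m x =
     (g * (psi g)^-1) * (k * (psi k)^-1) * x * (psi k * psi g)).
  { intro x. rewrite H. unfold nu; grp. }
  destruct (NU_EQ _ _ _ H') as [Em Hc]. rewrite Em in Hc.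
  assert (E : psi k * psi g *
      (psi ((g * (psi g)^-1) * (k * (psi k)^-1) * (psi k * psi g)))^-1
      = (comm G (psi (g * (psi g)^-1)) (psi k))^-1) by (unfold comm; grp).
  rewrite E in Hc. apply center_inv in Hc. rewrite invinv in Hc. exact Hc.
Qed.

Lemma conj_fwd g k : center G (comm G (psi (k * (psi k)^-1)) (psi g)) ->
  forall x, nu G psi (g * (k * (psi k)^-1) * g^-1 * psi k) x
            = g * nu G psi k (g^-1 * x).
Proof.
  intros Hz x.
  transitivity ((g * (k * (psi k)^-1) * g^-1) * x * psi k).
  - apply NU_EQ'. reflexivity.
    replace (psi k * (psi (g * (k * (psi k)^-1) * g^-1 * psi k))^-1)
      with (comm G (psi (k * (psi k)^-1)) (psi g)) by (unfold comm; grp).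
    exact Hz.
  - unfold nu; grp.
Qed.

Lemma conj_bwd m g k : (forall x, nu G psi m x = g * nu G psi k (g^-1 * x)) ->
  center G (comm G (psi (k * (psi k)^-1)) (psi g)).
Proof.
  intro H.
  assert (H' : forall x, nu G psi m x =
     (g * (k * (psi k)^-1) * g^-1) * x * psi k).
  { intro x. rewrite H. unfold nu; grp. }
  destruct (NU_EQ _ _ _ H') as [Em Hc]. rewrite Em in Hc.
  replace (psi k * (psi (g * (k * (psi k)^-1) * g^-1 * psi k))^-1)
      with (comm G (psi (k * (psi k)^-1)) (psi g)) in Hc by (unfold comm; grp).
  exact Hc.
Qed.

Lemma inv_fwd g : center G (comm G (psi (g * (psi g)^-1)) (psi g)) ->
  forall x, nu G psi ((g * (psi g)^-1)^-1 * (psi g)^-1) x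
          = (g * (psi g)^-1)^-1 * x * (psi g)^-1.
Proof.
  intros Hz. apply NU_EQ'. reflexivity.
  set (B := (psi g)^-1 * (psi g * (psi (psi g))^-1)^-1).
  replace ((psi g)^-1 * (psi ((g * (psi g)^-1)^-1 * (psi g)^-1))^-1)
    with (B * (comm G (psi (g * (psi g)^-1)) (psi g))^-1 * B^-1)
    by (unfold B, comm; grp).
  rewrite center_conj by (apply center_inv; exact Hz).
  apply center_inv; exact Hz.
Qed.

Lemma A_iff : is_perm_subgroup (Nset G psi) <-> P0.
Proof.
  unfold is_perm_subgroup, Nset. split.
  - intros [_ [_ [Hc _]]] g k.
    destruct (Hc (nu G psi g) (nu G psi k) (ex_intro _ g eq_refl)
               (ex_intro _ k eq_refl)) as [m Hm].
    apply (comp_bwd m). intro x. rewrite <- Hm. reflexivity.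
  - intro HP. split; [|split; [|split]].
    + intros f [g ->]. exists (fun x => (g * (psi g)^-1)^-1 * x * (psi g)^-1).
      split; intro; unfold nu; grp.
    + exists one. apply functional_extensionality. intro x. unfold nu. grp.
    + intros f1 f2 [g ->] [k ->]. exists (nu G psi g k).
      apply functional_extensionality. intro x. symmetry. apply comp_fwd, HP.
    + intros f f' [g ->] [Hl Hr]. exists ((g * (psi g)^-1)^-1 * (psi g)^-1).
      apply functional_extensionality. intro x. rewrite inv_fwd by apply HP.
      transitivity ((g * (psi g)^-1)^-1 * nu G psi g (f' x) * (psi g)^-1).
      unfold nu; grp. rewrite Hl. reflexivity.
Qed.

Lemma B_iff : normalised_by_lambda G (Nset G psi) <-> P0.
Proof.
  unfold normalised_by_lambda, Nset. split.
  - intros HB g k.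
    destruct ((proj2 (HB k (fun x => lambda G k (nu G psi g (lambda G (k^-1) x)))))
       (ex_intro _ (nu G psi g) (conj (ex_intro _ g eq_refl) eq_refl))) as [m Hm].
    apply (conj_bwd m). intro x. rewrite <- Hm. reflexivity.
  - intros HP g f. split.
    + intros [k ->].
      exists (nu G psi (g^-1 * (k * (psi k)^-1) * (g^-1)^-1 * psi k)).
      split. eexists; reflexivity.
      apply functional_extensionality. intro x. unfold lambda.
      rewrite (conj_fwd (g^-1) k (HP k (g^-1))).
      autorewrite with grp. reflexivity.
    + intros [eta [[k ->] ->]].
      exists (g * (k * (psi k)^-1) * g^-1 * psi k).
      apply functional_extensionality. intro x. symmetry.
      exact (conj_fwd g k (HP k g) x).
Qed.

Lemma R_holds : is_regular G (Nset G psi).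
Proof.
  unfold is_regular, Nset. split.
  - intros f1 f2 [g ->] [k ->] E.
    assert (g = k).
    { transitivity (nu G psi g one). unfold nu; grp. rewrite E. unfold nu; grp. }
    subst; reflexivity.
  - intro g. exists (nu G psi g). split. exists g; reflexivity. unfold nu; grp.
Qed.

Lemma NL_holds : normalises_lambda G (Nset G psi).
Proof.
  unfold normalises_lambda, Nset, lambdaG.
  intros eta eta' [g ->] [Hl Hr] f. split.
  - intros [h ->]. exists (lambda G ((g * (psi g)^-1)^-1 * h * (g * (psi g)^-1))).
    split. eexists; reflexivity.
    apply functional_extensionality. intro x. unfold lambda.
    transitivity (h * nu G psi g (eta' x)). rewrite Hl; reflexivity.
    unfold nu; grp.
  - intros [l [[h ->] ->]].
    exists ((g * (psi g)^-1) * h * (g * (psi g)^-1)^-1).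
    apply functional_extensionality. intro x. unfold lambda.
    transitivity ((g * (psi g)^-1) * h * (g * (psi g)^-1)^-1 * nu G psi g (eta' x)).
    unfold nu; grp. rewrite Hl; reflexivity.
Qed.

Lemma D_iff : (forall x, comm_sub G (comm_psi G psi) (fullset (T:=T)) x ->
                 center G (psi x)) <-> P0.
Proof.
  split.
  - intros HD g k.
    replace (comm G (psi (g * (psi g)^-1)) (psi k))
      with (psi (comm G (g * (psi g)^-1) k)) by (unfold comm; grp).
    apply HD. intros H HH Hgen. apply Hgen.
    exists (g * (psi g)^-1), k. split; [|split; [exact I|reflexivity]].
    intros H' HH' Hgen'. apply Hgen'. exists g; reflexivity.
  - intros HP x Hx. apply (Hx (fun x => center G (psi x))).
    + split; [|split].
      * rewrite psi1; apply center1.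
      * intros a b Ha Hb. rewrite psiM; apply center_mul; auto.
      * intros a Ha. rewrite psiV; apply center_inv; auto.
    + intros s [a [b [Ha [_ ->]]]].
      apply (Ha (fun a => forall b, center G (psi (comm G a b)))).
      * split; [|split].
        -- intro w. replace (psi (comm G one w)) with one by (unfold comm; grp).
           apply center1.
        -- intros u v Hu Hv w.
           replace (psi (comm G (u * v) w))
             with (psi u * psi (comm G v w) * (psi u)^-1 * psi (comm G u w))
             by (unfold comm; grp).
           rewrite center_conj by apply Hv. apply center_mul; auto.
        -- intros u Hu w.
           replace (psi (comm G (u^-1) w))
             with ((psi u)^-1 * (psi (comm G u w))^-1 * ((psi u)^-1)^-1)
             by (unfold comm; grp).
           rewrite center_conj by (apply center_inv; apply Hu).
           apply center_inv; apply Hu.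
      * intros s' [g ->] w.
        replace (psi (comm G (g * (psi g)^-1) w))
          with (comm G (psi (g * (psi g)^-1)) (psi w)) by (unfold comm; grp).
        apply HP.
Qed.

Definition icirc g := (g * (psi g)^-1)^-1 * (psi g)^-1.

Lemma circ_group : P0 -> group_axioms (nu G psi) one icirc.
Proof.
  intro HP. unfold group_axioms, icirc. split; [|split; [|split; [|split]]].
  - intros x y z. symmetry. apply comp_fwd, HP.
  - intro x; unfold nu; grp.
  - intro x; unfold nu; grp.
  - intro x. rewrite inv_fwd by apply HP. grp.
  - intro x; unfold nu; grp.
Qed.

Lemma E_iff : is_bi_skew_brace (gmul G) (fun g h => nu G psi g h) <-> P0.
Proof.
  unfold is_bi_skew_brace, is_skew_brace. split.
  - intros [[e1 [i1 [e2 [i2 [_ [[HA _] _]]]]]] _] g k.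
    apply (comp_bwd (nu G psi g k)). intro x. symmetry. exact (HA g k x).
  - intro HP. split.
    + exists one, (ginv G), one, icirc. split; [|split].
      * unfold group_axioms. exact (conj (gmulA _ G) (conj (gmul1l _ G)
          (conj (gmul1r _ G) (conj (gmulVl _ G) (gmulVr _ G))))).
      * exact (circ_group HP).
      * intros g h k. unfold nu; grp.
    + exists one, icirc, one, (ginv G). split; [|split].
      * exact (circ_group HP).
      * unfold group_axioms. exact (conj (gmulA _ G) (conj (gmul1l _ G)
          (conj (gmul1r _ G) (conj (gmulVl _ G) (gmulVr _ G))))).
      * intros g h k. cbv beta. unfold icirc.
        rewrite (comp_fwd (g * h) _ (HP _ _)).
        rewrite inv_fwd by apply HP. unfold nu; grp.
Qed.

End S.

Theorem theorem1p1 (T : Type) (G : group_on T) (psi : T -> T)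
  (Hpsi : is_endo G psi) :
  let N := Nset G psi in
  let circ := fun g h => nu G psi g h in
  ((is_perm_subgroup N <-> normalised_by_lambda G N) /\
   (normalised_by_lambda G N <->
      (is_perm_subgroup N /\ is_regular G N /\
       normalises_lambda G N /\ normalised_by_lambda G N)) /\
   ((is_perm_subgroup N /\ is_regular G N /\
       normalises_lambda G N /\ normalised_by_lambda G N) <->
      (forall x, comm_sub G (comm_psi G psi) (fullset (T:=T)) x ->
                 center G (psi x))) /\
   ((forall x, comm_sub G (comm_psi G psi) (fullset (T:=T)) x ->
                 center G (psi x)) <->
      is_bi_skew_brace (gmul G) circ)).
Proof.
  cbv zeta.
  pose proof (A_iff T G psi Hpsi) as HA.
  pose proof (B_iff T G psi Hpsi) as HB.
  pose proof (R_holds T G psi) as HR.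
  pose proof (NL_holds T G psi) as HN.
  pose proof (D_iff T G psi Hpsi) as HD.
  pose proof (E_iff T G psi Hpsi) as HE.
  tauto.
Qed.
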